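(* Let $\varphi(s,v)=\vec c(s)+v\vec q(s)$ be a developable timelike ruled surface of type $M^1_-$ in $\mathbb{R}^3_1$ and let the timelike ruled surface $\varphi^*(s,v)=\vec c(s)+R\vec a(s)+v\vec q^*(s)$ of type $M^1_+$ or $M^1_-$ be a Mannheim offset of $\varphi$, with $\theta$ the angle between $\vec q$ and $\vec q^*$. Let $\varphi_{h^*}$ and $\varphi_{a^*}$ be the trajectory ruled surfaces generated by $\vec h^*$ and $\vec a^*$. Then (a) $\varphi_{h^*}$ is nondevelopable; (b) $\varphi_{a^*}$ is developable if and only if $\sinh\theta+R\frac{ds_1}{ds}\kappa\cosh\theta=0$ when $\varphi^*$ is of type $M^1_+$, respectively $\cosh\theta+R\frac{ds_1}{ds}\kappa\sinh\theta=0$ when $\varphi^*$ is of type $M^1_-$.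
   Context: Work in Minkowski 3-space $\mathbb{R}^3_1$ with $\langle x,y\rangle=-x_1y_1+x_2y_2+x_3y_3$, $\|x\|=\sqrt{|\langle x,x\rangle|}$, and Lorentzian cross product $x\times y=(x_2y_3-x_3y_2,\,x_1y_3-x_3y_1,\,x_2y_1-x_1y_2)$. A ruled surface is $\varphi(s,v)=\vec c(s)+v\vec q(s)$ with $\vec q$ a unit non-null vector field, $\langle\vec q,\vec q\rangle=\varepsilon_2\in\{\pm1\}$, $d\vec q/ds$ non-null, $\vec c$ the striction curve ($\langle d\vec q/ds,d\vec c/ds\rangle=0$) and $s$ the arc length of $\vec c$. Its Frenet frame $\{\vec q,\vec h,\vec a\}$ has central normal $\vec h=\frac{d\vec q/ds}{\|d\vec q/ds\|}$ and asymptotic normal $\vec a=\frac{(d\vec q/ds)\times\vec q}{\|d\vec q/ds\|}$. Type $M^1_-$: $\vec q$ timelike, $\vec h$ spacelike; type $M^1_+$: $\vec q$, $\vec h$ spacelike. Let $s_1$ be the arc length of the spherical image of $\vec q$ and $\kappa$ the conical curvature of the directing cone, so that for these types $d\vec q/ds_1=\vec h$, $d\vec h/ds_1=-\varepsilon_2\vec q+\kappa\vec a$, $d\vec a/ds_1=\varepsilon_2\kappa\vec h$. A ruled surface $\psi(s,v)=\vec b(s)+v\vec e(s)$ has distribution parameter $\det(d\vec b/ds,\vec e,d\vec e/ds)/\langle d\vec e/ds,d\vec e/ds\rangle$ and is developable iff it vanishes identically. A ruled surface $\varphi^*(s,v)=\vec c^*(s)+v\vec q^*(s)$ with Frenet frame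 $\{\vec q^*,\vec h^*,\vec a^*\}$ is a Mannheim offset of $\varphi$ if its rulings correspond one-to-one with those of $\varphi$ and $\vec h^*=\vec a$; then $\vec c^*=\vec c+R\vec a$ with $R$ constant since $\varphi$ is developable. With $\theta$ the angle between $\vec q$ and $\vec q^*$: if $\varphi^*$ is of type $M^1_+$, $\vec q^*=\sinh\theta\,\vec q+\cosh\theta\,\vec h$, $\vec a^*=\cosh\theta\,\vec q+\sinh\theta\,\vec h$; if of type $M^1_-$, $\vec q^*=\cosh\theta\,\vec q+\sinh\theta\,\vec h$, $\vec a^*=\sinh\theta\,\vec q+\cosh\theta\,\vec h$. The trajectory ruled surfaces are $\varphi_{h^*}(s,v)=\vec c^*(s)+v\vec h^*(s)$ and $\varphi_{a^*}(s,v)=\vec c^*(s)+v\vec a^*(s)$. *)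

(* Defs.v *)
From Stdlib Require Import Reals.
From Coquelicot Require Import Coquelicot.
Open Scope R_scope.

Record V3 := mkV { x1 : R; x2 : R; x3 : R }.

Definition vadd (u v : V3) : V3 := mkV (x1 u + x1 v) (x2 u + x2 v) (x3 u + x3 v).
Definition vscale (k : R) (u : V3) : V3 := mkV (k * x1 u) (k * x2 u) (k * x3 u).

Definition lor (u v : V3) : R := - x1 u * x1 v + x2 u * x2 v + x3 u * x3 v.
Definition lnorm (u : V3) : R := sqrt (Rabs (lor u u)).
Definition lcross (u v : V3) : V3 :=
  mkV (x2 u * x3 v - x3 u * x2 v)
      (x1 u * x3 v - x3 u * x1 v)
      (x2 u * x1 v - x1 u * x2 v).
Definition det3 (u v w : V3) : R :=
    x1 u * (x2 v * x3 w - x3 v * x2 w)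
  - x2 u * (x1 v * x3 w - x3 v * x1 w)
  + x3 u * (x1 v * x2 w - x2 v * x1 w).

Definition vdiff_at (f : R -> V3) (s : R) : Prop :=
  ex_derive (fun t => x1 (f t)) s /\ ex_derive (fun t => x2 (f t)) s /\
  ex_derive (fun t => x3 (f t)) s.
Definition vD (f : R -> V3) (s : R) : V3 :=
  mkV (Derive (fun t => x1 (f t)) s) (Derive (fun t => x2 (f t)) s)
      (Derive (fun t => x3 (f t)) s).

Definition inI (lo hi s : R) : Prop := lo < s < hi.

Definition hvec (q : R -> V3) (s : R) : V3 := vscale (/ lnorm (vD q s)) (vD q s).
Definition avec (q : R -> V3) (s : R) : V3 :=
  vscale (/ lnorm (vD q s)) (lcross (vD q s) (q s)).

(** distribution parameter of psi(s,v) = b(s) + v e(s) *)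
Definition distparam (b e : R -> V3) (s : R) : R :=
  det3 (vD b s) (e s) (vD e s) / lor (vD e s) (vD e s).
Definition developable_on (lo hi : R) (b e : R -> V3) : Prop :=
  forall s, inI lo hi s -> distparam b e s = 0.

Inductive Mtype := Mplus | Mminus.

Definition qstar (t : Mtype) (th : R -> R) (q h : R -> V3) (s : R) : V3 :=
  match t with
  | Mplus  => vadd (vscale (sinh (th s)) (q s)) (vscale (cosh (th s)) (h s))
  | Mminus => vadd (vscale (cosh (th s)) (q s)) (vscale (sinh (th s)) (h s))
  end.
Definition astar (t : Mtype) (th : R -> R) (q h : R -> V3) (s : R) : V3 :=
  match t with
  | Mplus  => vadd (vscale (cosh (th s)) (q s)) (vscale (sinh (th s)) (h s))
  | Mminus => vadd (vscale (sinh (th s)) (q s)) (vscale (cosh (th s)) (h s))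
  end.
Definition cstar (c : R -> V3) (Rc : R) (a : R -> V3) (s : R) : V3 :=
  vadd (c s) (vscale Rc (a s)).

(** the developability criterion of Corollary 5.4(b); ds1/ds = ||dq/ds|| *)
Definition crit (t : Mtype) (th : R -> R) (Rc : R) (ds1 kap : R -> R) (s : R) : R :=
  match t with
  | Mplus  => sinh (th s) + Rc * ds1 s * kap s * cosh (th s)
  | Mminus => cosh (th s) + Rc * ds1 s * kap s * sinh (th s)
  end.

(* Main.v *)
Require Import Defs.
From Stdlib Require Import Reals Lra.
From Coquelicot Require Import Coquelicot.
Open Scope R_scope.

Lemma V3_eq u v : x1 u = x1 v -> x2 u = x2 v -> x3 u = x3 v -> u = v.
Proof. destruct u, v; simpl; intros; subst; reflexivity. Qed.
Lemma vD_lin2 (f g : R -> R) (u w : R -> V3) s :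
  ex_derive f s -> ex_derive g s -> vdiff_at u s -> vdiff_at w s ->
  vD (fun t => vadd (vscale (f t) (u t)) (vscale (g t) (w t))) s =
  vadd (vadd (vscale (Derive f s) (u s)) (vscale (f s) (vD u s)))
       (vadd (vscale (Derive g s) (w s)) (vscale (g s) (vD w s))).
Proof.
  intros Hf Hg [U1 [U2 U3]] [W1 [W2 W3]].
  unfold vD; simpl.
  rewrite (Derive_plus (fun t => f t * x1 (u t)) (fun t => g t * x1 (w t))).
  2,3: apply ex_derive_mult; assumption.
  rewrite (Derive_plus (fun t => f t * x2 (u t)) (fun t => g t * x2 (w t))).
  2,3: apply ex_derive_mult; assumption.
  rewrite (Derive_plus (fun t => f t * x3 (u t)) (fun t => g t * x3 (w t))).
  2,3: apply ex_derive_mult; assumption.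
  rewrite !Derive_mult by assumption. reflexivity.
Qed.
Lemma vD_cstar (c a : R -> V3) Rc s : vdiff_at c s -> vdiff_at a s ->
  vD (cstar c Rc a) s = vadd (vD c s) (vscale Rc (vD a s)).
Proof.
  intros [C1 [C2 C3]] [A1 [A2 A3]].
  unfold vD, cstar; simpl.
  rewrite (Derive_plus (fun t => x1 (c t)) (fun t => Rc * x1 (a t))).
  2: assumption. 2: apply ex_derive_scal; assumption.
  rewrite (Derive_plus (fun t => x2 (c t)) (fun t => Rc * x2 (a t))).
  2: assumption. 2: apply ex_derive_scal; assumption.
  rewrite (Derive_plus (fun t => x3 (c t)) (fun t => Rc * x3 (a t))).
  2: assumption. 2: apply ex_derive_scal; assumption.
  rewrite !Derive_scal. reflexivity.
Qed.
Lemma exd_sinh th s : ex_derive th s -> ex_derive (fun t => sinh (th t)) s.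
Proof. intros H. apply (ex_derive_comp sinh th); [|exact H].
 exists (cosh (th s)). apply is_derive_Reals. apply derivable_pt_lim_sinh. Qed.
Lemma exd_cosh th s : ex_derive th s -> ex_derive (fun t => cosh (th t)) s.
Proof. intros H. apply (ex_derive_comp cosh th); [|exact H].
 exists (sinh (th s)). apply is_derive_Reals. apply derivable_pt_lim_cosh. Qed.
Lemma mannheim_extract (u v w : V3) al be ga m : det3 u v w <> 0 ->
  vscale (/m) (vadd (vadd (vscale al u) (vscale be v)) (vscale ga w)) = w ->
  al = 0 /\ be = 0 /\ ga <> 0.
Proof.
  destruct u as [u1 u2 u3], v as [v1 v2 v3], w as [w1 w2 w3].
  unfold det3, vscale, vadd; simpl. intros HD HE. injection HE as E1 E2 E3.
  destruct (Req_dec m 0) as [Hm|Hm].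
  { subst m. rewrite Rinv_0 in E1, E2, E3. exfalso; apply HD.
    rewrite <- E1, <- E2, <- E3. ring. }
  assert (F1 : al*u1 + be*v1 + (ga - m)*w1 = 0).
  { assert (G : al*u1 + be*v1 + ga*w1 = m*w1) by (transitivity (m * (/m * (al*u1 + be*v1 + ga*w1))); [field; exact Hm | rewrite E1; reflexivity]). lra. }
  assert (F2 : al*u2 + be*v2 + (ga - m)*w2 = 0).
  { assert (G : al*u2 + be*v2 + ga*w2 = m*w2) by (transitivity (m * (/m * (al*u2 + be*v2 + ga*w2))); [field; exact Hm | rewrite E2; reflexivity]). lra. }
  assert (F3 : al*u3 + be*v3 + (ga - m)*w3 = 0).
  { assert (G : al*u3 + be*v3 + ga*w3 = m*w3) by (transitivity (m * (/m * (al*u3 + be*v3 + ga*w3))); [field; exact Hm | rewrite E3; reflexivity]). lra. }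
  set (D := u1 * (v2 * w3 - v3 * w2) - u2 * (v1 * w3 - v3 * w1) + u3 * (v1 * w2 - v2 * w1)) in *.
  assert (A : al * D = 0).
  { replace (al*D) with ((al*u1 + be*v1 + (ga - m)*w1) * (v2 * w3 - v3 * w2)
       - (al*u2 + be*v2 + (ga - m)*w2) * (v1 * w3 - v3 * w1)
       + (al*u3 + be*v3 + (ga - m)*w3) * (v1 * w2 - v2 * w1)) by (unfold D; ring).
    rewrite F1, F2, F3; ring. }
  assert (B : be * D = 0).
  { replace (be*D) with (- ((al*u1 + be*v1 + (ga - m)*w1) * (u2 * w3 - u3 * w2)
       - (al*u2 + be*v2 + (ga - m)*w2) * (u1 * w3 - u3 * w1)
       + (al*u3 + be*v3 + (ga - m)*w3) * (u1 * w2 - u2 * w1))) by (unfold D; ring).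
    rewrite F1, F2, F3; ring. }
  assert (C : (ga - m) * D = 0).
  { replace ((ga - m)*D) with ((al*u1 + be*v1 + (ga - m)*w1) * (u2 * v3 - u3 * v2)
       - (al*u2 + be*v2 + (ga - m)*w2) * (u1 * v3 - u3 * v1)
       + (al*u3 + be*v3 + (ga - m)*w3) * (u1 * v2 - u2 * v1)) by (unfold D; ring).
    rewrite F1, F2, F3; ring. }
  apply Rmult_integral in A; apply Rmult_integral in B; apply Rmult_integral in C.
  destruct A as [A|A]; [|contradiction]. destruct B as [B|B]; [|contradiction].
  destruct C as [C|C]; [|contradiction]. repeat split; auto. lra.
Qed.

Lemma cosh_pos x : 0 < cosh x.
Proof. unfold cosh. pose proof (exp_pos x); pose proof (exp_pos (-x)). lra. Qed.

Lemma lor_scale a u : lor (vscale a u) (vscale a u) = a * a * lor u u.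
Proof. destruct u; unfold lor, vscale; simpl; ring. Qed.

Lemma D_nz (qs p : V3) n : n <> 0 -> lor qs qs = -1 -> lor p p > 0 ->
  det3 qs (vscale (/n) p) (vscale (/n) (lcross p qs)) <> 0.
Proof.
  intros Hn Hq Hp.
  replace (det3 qs (vscale (/n) p) (vscale (/n) (lcross p qs)))
    with (/n * /n * (lor p qs ^ 2 - lor p p * lor qs qs))
    by (destruct qs, p; unfold det3, lor, lcross, vscale; simpl; ring).
  rewrite Hq. apply Rmult_integral_contrapositive; split.
  - apply Rmult_integral_contrapositive; split; apply Rinv_neq_0_compat; exact Hn.
  - nra.
Qed.

Definition Xof (t : Mtype) (th : R -> R) (s : R) : R :=
  match t with Defs.Mplus => sinh (th s) | Defs.Mminus => cosh (th s) end.

Lemma pointwise (q : R -> V3) kap th t s :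
  vdiff_at q s -> vdiff_at (hvec q) s -> ex_derive th s ->
  lor (q s) (q s) = -1 -> lor (vD q s) (vD q s) > 0 ->
  vD (hvec q) s = vscale (lnorm (vD q s))
                    (vadd (q s) (vscale (kap s) (avec q s))) ->
  hvec (qstar t th q (hvec q)) s = avec q s ->
  0 < lnorm (vD q s) /\ kap s <> 0 /\
  det3 (q s) (hvec q s) (avec q s) <> 0 /\
  0 < lor (hvec q s) (hvec q s) /\
  vD (astar t th q (hvec q)) s =
    vscale (lnorm (vD q s) * Xof t th s * kap s) (avec q s).
Proof.
  intros Dq Dh Dth Hq Hp Hh HM.
  set (n := lnorm (vD q s)) in *.
  assert (Hn : 0 < n).
  { unfold n, lnorm. rewrite Rabs_pos_eq by lra. apply sqrt_lt_R0; lra. }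
  assert (HD : det3 (q s) (hvec q s) (avec q s) <> 0).
  { unfold hvec, avec. fold n. apply D_nz; auto; lra. }
  assert (Hpn : vD q s = vscale n (hvec q s)).
  { unfold hvec; fold n. destruct (vD q s); apply V3_eq; simpl; field; lra. }
  assert (Hhh : 0 < lor (hvec q s) (hvec q s)).
  { unfold hvec. rewrite lor_scale. apply Rmult_lt_0_compat; [|lra].
    apply Rmult_lt_0_compat; apply Rinv_0_lt_compat; exact Hn. }
  pose proof (exd_sinh th s Dth) as DS. pose proof (exd_cosh th s Dth) as DC.
  set (F1 := Derive (fun t => sinh (th t)) s).
  set (G1 := Derive (fun t => cosh (th t)) s).
  set (S := sinh (th s)). set (C := cosh (th s)).
  pose proof (cosh_pos (th s)) as HC. fold C in HC.
  revert HM. unfold hvec at 1. generalize (lnorm (vD (qstar t th q (hvec q)) s)).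
  intros m HM.
  destruct t; simpl Xof.
  - assert (E : vD (qstar Defs.Mplus th q (hvec q)) s = vadd (vadd (vscale F1 (q s)) (vscale S (vD q s))) (vadd (vscale G1 (hvec q s)) (vscale C (vD (hvec q) s))))
      by exact (vD_lin2 (fun t => sinh (th t)) (fun t => cosh (th t)) q (hvec q) s DS DC Dq Dh).
    rewrite E, Hpn, Hh in HM. fold S C F1 G1 in HM.
    pose proof (mannheim_extract (q s) (hvec q s) (avec q s) (F1 + n * C) (n * S + G1)
                 (n * C * kap s) m HD) as X.
    destruct X as [X1 [X2 X3]].
    { rewrite <- HM at 2. f_equal. destruct (q s), (hvec q s), (avec q s).
      apply V3_eq; simpl; ring. }
    repeat split; auto.
    + intro K; apply X3; rewrite K; ring.
    + assert (E2 : vD (astar Defs.Mplus th q (hvec q)) s = vadd (vadd (vscale G1 (q s)) (vscale C (vD q s))) (vadd (vscale F1 (hvec q s)) (vscale S (vD (hvec q) s))))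
      by exact (vD_lin2 (fun t => cosh (th t)) (fun t => sinh (th t)) q (hvec q) s DC DS Dq Dh).
      rewrite E2, Hpn, Hh. fold S C F1 G1.
      destruct (q s), (hvec q s), (avec q s).
      apply V3_eq; simpl; nra.
  - assert (E : vD (qstar Defs.Mminus th q (hvec q)) s = vadd (vadd (vscale G1 (q s)) (vscale C (vD q s))) (vadd (vscale F1 (hvec q s)) (vscale S (vD (hvec q) s))))
      by exact (vD_lin2 (fun t => cosh (th t)) (fun t => sinh (th t)) q (hvec q) s DC DS Dq Dh).
    rewrite E, Hpn, Hh in HM. fold S C F1 G1 in HM.
    pose proof (mannheim_extract (q s) (hvec q s) (avec q s) (G1 + n * S) (n * C + F1)
                 (n * S * kap s) m HD) as X.
    destruct X as [X1 [X2 X3]].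
    { rewrite <- HM at 2. f_equal. destruct (q s), (hvec q s), (avec q s).
      apply V3_eq; simpl; ring. }
    repeat split; auto.
    + intro K; apply X3; rewrite K; ring.
    + assert (E2 : vD (astar Defs.Mminus th q (hvec q)) s = vadd (vadd (vscale F1 (q s)) (vscale S (vD q s))) (vadd (vscale G1 (hvec q s)) (vscale C (vD (hvec q) s))))
      by exact (vD_lin2 (fun t => sinh (th t)) (fun t => cosh (th t)) q (hvec q) s DS DC Dq Dh).
      rewrite E2, Hpn, Hh. fold S C F1 G1.
      destruct (q s), (hvec q s), (avec q s).
      apply V3_eq; simpl; nra.
Qed.

Lemma alg_a qs hs as_ Rc m :
  det3 (vadd qs (vscale Rc (vscale m hs))) as_ (vscale m hs) = - m * det3 qs hs as_.
Proof. destruct qs, hs, as_; unfold det3, vadd, vscale; simpl; ring. Qed.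

Lemma alg_b (qs hs as_ : V3) Rc m A B w :
  det3 (vadd qs (vscale Rc (vscale m hs))) (vadd (vscale A qs) (vscale B hs)) (vscale w as_)
  = w * (B - Rc * m * A) * det3 qs hs as_.
Proof. destruct qs, hs, as_; unfold det3, vadd, vscale; simpl; ring. Qed.

Lemma div_zero_iff a b : b <> 0 -> (a / b = 0 <-> a = 0).
Proof.
  intros Hb; split; intro H.
  - unfold Rdiv in H. apply Rmult_integral in H. destruct H as [H|H]; auto.
    exfalso; exact (Rinv_neq_0_compat b Hb H).
  - rewrite H; unfold Rdiv; ring.
Qed.

Theorem corollary5p4
  (lo hi : R) (c q : R -> V3) (kap th : R -> R) (Rc : R) (t : Mtype) :
  lo < hi ->
  (forall s, inI lo hi s ->
     vdiff_at c s /\ vdiff_at q s /\ vdiff_at (hvec q) s /\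
     vdiff_at (avec q) s /\ ex_derive th s) ->
  (forall s, inI lo hi s -> lor (q s) (q s) = -1) ->
  (forall s, inI lo hi s -> lor (vD q s) (vD q s) > 0) ->
  (forall s, inI lo hi s -> lor (vD q s) (vD c s) = 0) ->
  (forall s, inI lo hi s -> Rabs (lor (vD c s) (vD c s)) = 1) ->
  developable_on lo hi c q ->
  (forall s, inI lo hi s -> vD c s = q s) ->
  (forall s, inI lo hi s ->
     vD (hvec q) s = vscale (lnorm (vD q s))
                       (vadd (q s) (vscale (kap s) (avec q s)))) ->
  (forall s, inI lo hi s ->
     vD (avec q) s = vscale (- lnorm (vD q s) * kap s) (hvec q s)) ->
  (forall s, inI lo hi s ->
     hvec (qstar t th q (hvec q)) s = avec q s) ->
  ~ developable_on lo hi (cstar c Rc (avec q)) (avec q)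
  /\
  ((forall s, inI lo hi s ->
      lor (vD (astar t th q (hvec q)) s) (vD (astar t th q (hvec q)) s) <> 0) ->
   (developable_on lo hi (cstar c Rc (avec q)) (astar t th q (hvec q)) <->
    forall s, inI lo hi s ->
      crit t th Rc (fun s => lnorm (vD q s)) kap s = 0)).
Proof.
  intros Hlt Hreg Hq Hp Hstr Har Hdev HcQ Hh Ha HM.
  assert (PW : forall s, inI lo hi s ->
    0 < lnorm (vD q s) /\ kap s <> 0 /\
    det3 (q s) (hvec q s) (avec q s) <> 0 /\
    0 < lor (hvec q s) (hvec q s) /\
    vD (astar t th q (hvec q)) s =
      vscale (lnorm (vD q s) * Xof t th s * kap s) (avec q s)).
  { intros s Hs. destruct (Hreg s Hs) as [Dc [Dq [Dh [Da Dth]]]].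
    apply pointwise; auto. }
  assert (CS : forall s, inI lo hi s ->
    vD (cstar c Rc (avec q)) s =
      vadd (q s) (vscale Rc (vscale (- lnorm (vD q s) * kap s) (hvec q s)))).
  { intros s Hs. destruct (Hreg s Hs) as [Dc [Dq [Dh [Da Dth]]]].
    rewrite vD_cstar by assumption. rewrite HcQ, Ha by assumption. reflexivity. }
  split.
  - intro Hd.
    set (s0 := (lo + hi) / 2).
    assert (Hs0 : inI lo hi s0) by (unfold inI, s0; lra).
    specialize (Hd s0 Hs0). unfold distparam in Hd.
    rewrite CS, Ha in Hd by exact Hs0. rewrite alg_a in Hd.
    destruct (PW s0 Hs0) as [Hn [Hk [HD [Hhh _]]]].
    rewrite lor_scale in Hd.
    apply div_zero_iff in Hd.
    + apply Rmult_integral in Hd. destruct Hd as [Hd|Hd]; [|contradiction].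
      apply Hk. nra.
    + apply Rmult_integral_contrapositive; split; [|lra].
      apply Rmult_integral_contrapositive; split; nra.
  - intros Hden. unfold developable_on. split; intros H s Hs; specialize (H s Hs).
    + destruct (PW s Hs) as [Hn [Hk [HD [Hhh HA]]]].
      unfold distparam in H. apply div_zero_iff in H; [|exact (Hden s Hs)].
      pose proof (Hden s Hs) as Hd'. rewrite HA in Hd', H. rewrite CS in H by exact Hs.
      destruct t; unfold astar in H; simpl Xof in H, Hd'; rewrite alg_b in H;
        unfold crit; apply Rmult_integral in H; destruct H as [H|H];
        try (exfalso; exact (HD H)).
      * apply Rmult_integral in H; destruct H as [H|H]; [|nra].
        exfalso; apply Hd'. rewrite H. rewrite lor_scale. ring.
      * apply Rmult_integral in H; destruct H as [H|H]; [|nra].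
        exfalso; apply Hd'. rewrite H. rewrite lor_scale. ring.
    + destruct (PW s Hs) as [Hn [Hk [HD [Hhh HA]]]].
      unfold distparam. apply div_zero_iff; [exact (Hden s Hs)|].
      rewrite HA, CS by exact Hs.
      destruct t; unfold astar; simpl Xof; rewrite alg_b; unfold crit in H;
        replace (_ - _) with 0 by nra; ring.
Qed.
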